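(* Let $q=p^{m_0}$ with $p$ prime, let $A=\mathbb{F}_q[\theta]$, and let $m$ be a positive integer. Then $$\Pi\left(\frac{q^{m+1}-1}{q-1}\right)=\det V(0,[1],\ldots,[m]),$$ where $V(0,[1],\ldots,[m])$ is the $(m+1)\times(m+1)$ matrix whose row indexed by $i\in\{0,1,\ldots,m\}$ is $(1,[i],[i]^2,\ldots,[i]^m)$, with the convention $[0]:=0$ and $0^0=1$ (so the first row is $(1,0,\ldots,0)$).
   Context: For a positive integer $i$, $[i]:=\theta^{q^i}-\theta\in A$. Set $D_0:=1$ and, for $i>0$, $D_i:=[i][i-1]^q\cdots[1]^{q^{i-1}}$ (equivalently $D_i=[i]D_{i-1}^q$). For a nonnegative integer $j$ with $q$-adic expansion $j=\sum_{t=0}^{n}c_tq^t$, $0\le c_t<q$, the Carlitz factorial is $\Pi(j):=\prod_{t=0}^{n}D_t^{c_t}$. In particular $\Pi\left(\frac{q^{m+1}-1}{q-1}\right)=D_0D_1\cdots D_m$. *)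

(* Defs.v *)
From HB Require Import structures.
From mathcomp Require Import all_boot all_order all_algebra all_field.
Set Implicit Arguments. Unset Strict Implicit. Unset Printing Implicit Defensive.
Import GRing.Theory.
Local Open Scope ring_scope.

(* A = F_q[theta] is modelled as {poly F} for a finite field F, theta = 'X,
   and q := #|F|. *)
Section Carlitz.
Variable F : finFieldType.

Definition qF : nat := #|F|.

Definition bracket (i : nat) : {poly F} := 'X ^+ (qF ^ i) - 'X.

Fixpoint Dcar (i : nat) : {poly F} :=
  match i with
  | 0 => 1
  | i'.+1 => bracket i'.+1 * (Dcar i') ^+ qF
  end.

Definition qdigit (j t : nat) : nat := (j %/ qF ^ t) %% qF.

(* Carlitz factorial: Pi(j) = prod_t D_t^(c_t); digits of index t > j vanish
   since q^t > j, so the product over t < j.+1 covers the whole expansion. *)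
Definition carlitz_fact (j : nat) : {poly F} :=
  \prod_(t < j.+1) Dcar t ^+ qdigit j t.

Definition bracket0 (i : nat) : {poly F} := if i == 0%N then 0 else bracket i.

Definition Vbr (m : nat) : 'M[{poly F}]_(m.+1) :=
  \matrix_(i < m.+1, j < m.+1) bracket0 i ^+ j.
End Carlitz.

(* Main.v *)
Require Import Defs.
From HB Require Import structures.
From mathcomp Require Import all_boot all_order all_algebra all_field.
From mathcomp Require Import zify.
Local Open Scope ring_scope.
Import GRing.Theory.

Section Aux.
Variable F : finFieldType.
Local Notation q := (qF F).

Lemma q_gt1 : (1 < q)%N.
Proof. exact: finNzRing_gt1. Qed.

Lemma frobq (a b : {poly F}) : (a - b) ^+ q = a ^+ q - b ^+ q.
Proof.
have [p _ pcharFp] := finPcharP F.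
have pc : p \in [pchar {poly F}] by rewrite pchar_poly.
have -> : q = (p ^ logn p #|F|)%N := card_pprimeChar pcharFp.
elim: (logn p #|F|) => [|n IHn]; first by rewrite !expr1.
by rewrite expnSr !exprM IHn -!(pFrobenius_autE pc) rmorphB.
Qed.

Lemma Dcar_prod j :
  Dcar F j = \prod_(i < j) ('X ^+ (q ^ j) - 'X ^+ (q ^ i)).
Proof.
elim: j => [|j IH]; first by rewrite big_ord0.
rewrite big_ord_recl /= IH -prodrXl expn0 expr1 /bracket.
congr (_ * _); apply: eq_bigr => i _.
by rewrite frobq -!exprM -!expnSr.
Qed.

Definition s (n : nat) : nat := (\sum_(t < n) q ^ t)%N.

Lemma sS n : s n.+1 = (s n + q ^ n)%N.
Proof. by rewrite /s big_ord_recr. Qed.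

Lemma sSl n : s n.+1 = (1 + q * s n)%N.
Proof.
rewrite /s big_ord_recl expn0 big_distrr /=; congr (_ + _)%N.
by apply: eq_bigr => i _; rewrite expnS.
Qed.

Lemma s_lt n : (s n < q ^ n)%N.
Proof.
have := q_gt1; elim: n => [|n IH] h; first by rewrite /s big_ord0.
rewrite sS expnS; have := IH h; nia.
Qed.

Lemma s_split a b : s (a + b) = (s a + q ^ a * s b)%N.
Proof.
elim: b => [|b IH]; first by rewrite addn0 /s big_ord0 muln0 addn0.
by rewrite addnS !sS IH expnD; nia.
Qed.

Lemma s_geom n : ((q - 1) * s n)%N = (q ^ n - 1)%N.
Proof.
have h := q_gt1.
elim: n => [|n IH]; first by rewrite /s big_ord0 muln0.
rewrite sS mulnDr IH expnS.
have : (0 < q ^ n)%N by rewrite expn_gt0 ltnW.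
nia.
Qed.

Lemma j_eq m : ((q ^ m.+1 - 1) %/ (q - 1))%N = s m.+1.
Proof.
have h := q_gt1.
by rewrite -s_geom mulKn //; lia.
Qed.

Lemma s_ge n : (n <= s n)%N.
Proof.
elim: n => [|n IH] //; rewrite sS.
have : (0 < q ^ n)%N by rewrite expn_gt0 ltnW // q_gt1.
lia.
Qed.

Lemma digit m t : qdigit F (s m.+1) t = (t < m.+1)%N.
Proof.
have h := q_gt1.
rewrite /qdigit; case: (ltnP t m.+1) => ht.
  have -> : m.+1 = (t + (m - t).+1)%N by lia.
  rewrite s_split addnC mulnC divnMDl; last by rewrite expn_gt0 ltnW.
  rewrite divn_small ?s_lt // addn0 sSl addnC mulnC modnMDl modn_small //.
rewrite divn_small ?mod0n //.
apply: (leq_trans (s_lt _)); rewrite leq_exp2l //.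
Qed.
End Aux.

Theorem corollary2p7 (F : finFieldType) (m : nat) (hm : (0 < m)%N) :
  carlitz_fact F ((qF F ^ m.+1 - 1) %/ (qF F - 1)) = \det (Vbr F m).
Proof.
have b0 : forall i, bracket0 F i = 'X ^+ (qF F ^ i) - 'X.
  by move=> [|i] //; rewrite /bracket0 /= expn0 expr1 subrr.
have -> : Vbr F m = (Vandermonde m.+1 (\row_j bracket0 F j))^T.
  by apply/matrixP => i j; rewrite !mxE.
rewrite det_tr det_Vandermonde.
rewrite (exchange_big_dep (fun j : 'I_m.+1 => true)) //=.
rewrite /carlitz_fact j_eq.
transitivity (\prod_(t < m.+1) Dcar F t).
  rewrite (big_ord_widen (s F m.+1).+1 (Dcar F)); last by rewrite ltnS (leq_trans (leqnSn m) (s_ge F _)).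
  rewrite [RHS]big_mkcond /=.
  apply: eq_bigr => t _; rewrite digit.
  by case: ifP => ht; rewrite ?expr0 ?expr1.
apply: eq_bigr => j _; rewrite Dcar_prod.
rewrite (big_ord_widen m.+1 (fun i => 'X ^+ (qF F ^ j) - 'X ^+ (qF F ^ i))); last exact: ltnW.
apply: eq_bigr => i _; rewrite !mxE !b0 opprB addrA subrK.
reflexivity.
Qed.
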